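(* For the modified navigation function $\mathcal{V}_{nav}$ defined below, for all $(p,\theta)\in\mathcal{X}_p\times\mathbb{R}$, $$\nabla_p\mathcal{V}_{nav}(p,\theta)=\nabla_pV_{nav}(p)+(I_2-\mathcal{R}(\theta))^\top(p_d-p_o),$$ $$\nabla_\theta\mathcal{V}_{nav}(p,\theta)=\gamma_\theta\theta-(p-p_o)^\top\Delta\,\mathcal{R}(\theta)^\top(p_o-p_d),$$ and the set of critical points $C_{\mathcal{V}_{nav}}:=\{(p,\theta)\in\mathcal{X}_p\times\mathbb{R}:\nabla_p\mathcal{V}_{nav}(p,\theta)=0,\ \nabla_\theta\mathcal{V}_{nav}(p,\theta)=0\}$ equals $C_{V_{nav}}\times\{0\}$, where $C_{V_{nav}}=\{p\in\mathcal{X}_p:\nabla_pV_{nav}(p)=0\}$.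
   Context: Obstacle $\mathcal{O}=\{z\in\mathbb{R}^2:\|z-p_o\|\le r_o\}$ with center $p_o\in\mathbb{R}^2$ and radius $r_o>0$; safety margin $\varepsilon>0$; free space $\mathcal{X}_p=\{p\in\mathbb{R}^2:\|p-p_o\|\ge r_o+\varepsilon\}$. Distance $d_o(p)=\|p-p_o\|-r_o$. Destination $p_d\in\mathcal{X}_p$, $r_d:=d_o(p_d)$, and $r_s\in(\varepsilon,r_d)$. Barrier $\phi(z)=(z-r_s)^2\ln(r_s/z)$ for $z\in(0,r_s]$ and $\phi(z)=0$ for $z>r_s$. Navigation function $V_{nav}(p)=\frac12\|p-p_d\|^2+\varrho\,\phi(d_o(p))$ with $\varrho>0$; its gradient is $\nabla_pV_{nav}(p)=p-p_d+\varrho\,\phi'(d_o(p))\frac{p-p_o}{\|p-p_o\|}$. Rotation $\mathcal{R}(\theta)=\exp(\theta\Delta)=\begin{bmatrix}\cos\theta&-\sin\theta\\ \sin\theta&\cos\theta\end{bmatrix}$ with $\Delta=\begin{bmatrix}0&-1\\1&0\end{bmatrix}$. Transformation $\mathcal{T}(p,\theta)=p_o+\mathcal{R}(\theta)(p-p_o)$. Modified navigation function $\mathcal{V}_{nav}(p,\theta)=V_{nav}(\mathcal{T}(p,\theta))+\frac{\gamma_\theta}{2}\theta^2$ with $\gamma_\theta>0$, equivalently $\mathcal{V}_{nav}(p,\theta)=\frac12\|\mathcal{T}(p,\theta)-p_d\|^2+\varrho\phi(d_o(p))+\frac{\gamma_\theta}{2}\theta^2$. *)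

(* Defs.v *)
From Stdlib Require Import Reals.
From Coquelicot Require Import Coquelicot.
Open Scope R_scope.

Definition norm2 (x y : R) : R := sqrt (x * x + y * y).

Definition d_o (po1 po2 ro p1 p2 : R) : R := norm2 (p1 - po1) (p2 - po2) - ro.

Definition in_Xp (po1 po2 ro eps p1 p2 : R) : Prop :=
  norm2 (p1 - po1) (p2 - po2) >= ro + eps.

(* barrier phi (meaningful for z > 0) *)
Definition phi (rs z : R) : R :=
  if Rle_dec z rs then (z - rs) ^ 2 * ln (rs / z) else 0.

Definition Vnav (po1 po2 ro pd1 pd2 rs rho p1 p2 : R) : R :=
  / 2 * ((p1 - pd1) ^ 2 + (p2 - pd2) ^ 2)
  + rho * phi rs (d_o po1 po2 ro p1 p2).

Definition gradVnav1 (po1 po2 ro pd1 pd2 rs rho p1 p2 : R) : R :=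
  p1 - pd1 + rho * Derive (phi rs) (d_o po1 po2 ro p1 p2)
                 * ((p1 - po1) / norm2 (p1 - po1) (p2 - po2)).
Definition gradVnav2 (po1 po2 ro pd1 pd2 rs rho p1 p2 : R) : R :=
  p2 - pd2 + rho * Derive (phi rs) (d_o po1 po2 ro p1 p2)
                 * ((p2 - po2) / norm2 (p1 - po1) (p2 - po2)).

(* T(p, theta) = p_o + R(theta)(p - p_o), R(theta) = [[cos,-sin],[sin,cos]] *)
Definition T1 (po1 po2 p1 p2 th : R) : R :=
  po1 + (cos th * (p1 - po1) - sin th * (p2 - po2)).
Definition T2 (po1 po2 p1 p2 th : R) : R :=
  po2 + (sin th * (p1 - po1) + cos th * (p2 - po2)).

Definition mVnav (po1 po2 ro pd1 pd2 rs rho gam p1 p2 th : R) : R :=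
  Vnav po1 po2 ro pd1 pd2 rs rho (T1 po1 po2 p1 p2 th) (T2 po1 po2 p1 p2 th)
  + gam / 2 * th ^ 2.

Definition dmV_p1 po1 po2 ro pd1 pd2 rs rho gam p1 p2 th : R :=
  Derive (fun x => mVnav po1 po2 ro pd1 pd2 rs rho gam x p2 th) p1.
Definition dmV_p2 po1 po2 ro pd1 pd2 rs rho gam p1 p2 th : R :=
  Derive (fun y => mVnav po1 po2 ro pd1 pd2 rs rho gam p1 y th) p2.
Definition dmV_th po1 po2 ro pd1 pd2 rs rho gam p1 p2 th : R :=
  Derive (fun t => mVnav po1 po2 ro pd1 pd2 rs rho gam p1 p2 t) th.

(* Main.v *)
Require Import Defs.
From Stdlib Require Import Reals Lra Psatz.
From Coquelicot Require Import Coquelicot.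
Open Scope R_scope.

Lemma ln_le_xm1 x : 0 < x -> ln x <= x - 1.
Proof. intros Hx. pose proof (exp_ineq1_le (ln x)). rewrite exp_ln in H; lra. Qed.

Lemma ln_ge0 x : 1 <= x -> 0 <= ln x.
Proof. intros Hx. destruct (Req_dec x 1) as [->|Hn]. rewrite ln_1; lra.
  rewrite <- ln_1. left; apply ln_increasing; lra. Qed.

Lemma phi_ex_derive rs z : 0 < rs -> 0 < z -> ex_derive (phi rs) z.
Proof.
  intros Hrs Hz.
  destruct (Rtotal_order z rs) as [Hlt|[Heq|Hgt]].
  - apply ex_derive_ext_loc with (f := fun t => (t - rs) ^ 2 * ln (rs / t)).
    + assert (He : 0 < rs - z) by lra.
      exists (mkposreal _ He). intros t Ht. unfold ball in Ht; simpl in Ht.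
      unfold AbsRing_ball, abs, minus, plus, opp in Ht; simpl in Ht.
      apply Rabs_lt_between in Ht.
      unfold phi. destruct (Rle_dec t rs); [reflexivity| lra].
    + auto_derive. split; [lra|split; [|auto]]. apply Rdiv_lt_0_compat; lra.
  - subst z. exists 0. apply is_derive_Reals. intros e He.
    assert (Hd : 0 < Rmin (rs/2) (Rmin 1 (e * rs / 2))).
    { apply Rmin_pos; [lra|apply Rmin_pos; [lra|]]. apply Rdiv_lt_0_compat; nra. }
    exists (mkposreal _ Hd). intros h Hh0 Hh. simpl in Hh.
    pose proof (Rmin_l (rs/2) (Rmin 1 (e * rs / 2))).
    pose proof (Rmin_r (rs/2) (Rmin 1 (e * rs / 2))).
    pose proof (Rmin_l 1 (e * rs / 2)). pose proof (Rmin_r 1 (e * rs / 2)).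
    assert (Hphi : phi rs rs = 0).
    { unfold phi. destruct (Rle_dec rs rs); [|lra]. replace (rs - rs) with 0 by ring. ring. }
    rewrite Hphi. unfold phi. destruct (Rle_dec (rs + h) rs).
    + assert (Hh' : h < 0) by (destruct (Rle_lt_or_eq_dec _ _ r); [lra|exfalso; apply Hh0; lra]).
      rewrite Rabs_left in Hh by lra.
      assert (Hge1 : 1 <= rs / (rs + h)).
      { apply (Rmult_le_reg_r (rs + h)); [lra|]. field_simplify; lra. }
      pose proof (ln_ge0 _ Hge1) as L0.
      pose proof (ln_le_xm1 (rs / (rs + h)) ltac:(apply Rdiv_lt_0_compat; lra)) as L1.
      assert (Hq : rs / (rs + h) - 1 = - h / (rs + h)) by (field; lra).
      assert (Hq2 : - h / (rs + h) <= 2 * (-h) / rs).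
      { assert (Hi : / (rs + h) <= / (rs / 2)) by (apply Rinv_le_contravar; lra).
        replace (/ (rs/2)) with (2 / rs) in Hi by (field; lra).
        unfold Rdiv in *. assert (0 <= -h) by lra. nra. }
      set (L := ln (rs / (rs + h))) in *.
      match goal with |- Rabs ?X < _ => replace X with (h * L) by (field; lra) end.
      rewrite Rabs_left1 by nra.
      assert (L <= 2 * (-h)/rs) by lra.
      assert (2 * (-h) / rs * rs = 2 * (-h)) by (field; lra).
      assert (h * h <= - h) by nra.
      assert (-h * L <= -h * (2 * (-h)/rs)) by nra.
      assert (-h * (2 * (-h)/rs) * rs = 2 * (h*h)) by (field; lra).
      assert (2 * (h*h) < e * rs) by nra.
      nra.
    + replace ((0 - 0) / h - 0) with 0 by (field; lra). rewrite Rabs_R0; lra.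
  - apply ex_derive_ext_loc with (f := fun _ => 0).
    + assert (He : 0 < z - rs) by lra.
      exists (mkposreal _ He). intros t Ht. unfold ball in Ht; simpl in Ht.
      unfold AbsRing_ball, abs, minus, plus, opp in Ht; simpl in Ht.
      apply Rabs_lt_between in Ht.
      unfold phi. destruct (Rle_dec t rs); [lra|reflexivity].
    + auto_derive. auto.
Qed.

Lemma is_derive_eq (f : R -> R) x l l' : is_derive f x l -> l = l' -> is_derive f x l'.
Proof. intros H ->; exact H. Qed.

Lemma dT po1 po2 ro p1 p2 th :
  d_o po1 po2 ro (T1 po1 po2 p1 p2 th) (T2 po1 po2 p1 p2 th) = d_o po1 po2 ro p1 p2.
Proof.
  unfold d_o, norm2, T1, T2. do 2 f_equal.
  pose proof (sin2_cos2 th) as H. unfold Rsqr in H.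
  transitivity (((p1 - po1) * (p1 - po1) + (p2 - po2) * (p2 - po2)) * (sin th * sin th + cos th * cos th)); [ring|].
  rewrite H; ring.
Qed.

Lemma mV_eq po1 po2 ro pd1 pd2 rs rho gam p1 p2 th :
  mVnav po1 po2 ro pd1 pd2 rs rho gam p1 p2 th =
  / 2 * ((po1 + (cos th * (p1 - po1) - sin th * (p2 - po2)) - pd1) ^ 2
       + (po2 + (sin th * (p1 - po1) + cos th * (p2 - po2)) - pd2) ^ 2)
  + rho * phi rs (d_o po1 po2 ro p1 p2) + gam / 2 * th ^ 2.
Proof. unfold mVnav, Vnav. rewrite dT. reflexivity. Qed.

Lemma d_o_der1 po1 po2 ro p1 p2 : 0 < (p1-po1)^2+(p2-po2)^2 ->
  is_derive (fun x => d_o po1 po2 ro x p2) p1 ((p1-po1)/norm2 (p1-po1) (p2-po2)).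
Proof.
  intros H. unfold d_o, norm2. auto_derive.
  - nra.
  - replace ((p1 + - po1) * (p1 + - po1) + (p2 - po2) * (p2 - po2)) with ((p1 - po1) * (p1 - po1) + (p2 - po2) * (p2 - po2)) by ring.
    assert (0 < sqrt ((p1 - po1) * (p1 - po1) + (p2 - po2) * (p2 - po2))) by (apply sqrt_lt_R0; nra).
    field. lra.
Qed.

Lemma d_o_der2 po1 po2 ro p1 p2 : 0 < (p1-po1)^2+(p2-po2)^2 ->
  is_derive (fun y => d_o po1 po2 ro p1 y) p2 ((p2-po2)/norm2 (p1-po1) (p2-po2)).
Proof.
  intros H. unfold d_o, norm2. auto_derive.
  - nra.
  - replace ((p1 - po1) * (p1 - po1) + (p2 + - po2) * (p2 + - po2)) with ((p1 - po1) * (p1 - po1) + (p2 - po2) * (p2 - po2)) by ring.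
    assert (0 < sqrt ((p1 - po1) * (p1 - po1) + (p2 - po2) * (p2 - po2))) by (apply sqrt_lt_R0; nra).
    field. lra.
Qed.

Lemma der_sum3 (f g : R -> R) (c x a b : R) : is_derive f x a -> is_derive g x b ->
  is_derive (fun t => f t + g t + c) x (a + b).
Proof.
  intros Ha Hb. replace (a + b) with (plus (plus a b) zero) by (unfold plus, zero; simpl; ring).
  apply (is_derive_plus (fun t => f t + g t) (fun _ => c)).
  - apply (is_derive_plus f g); assumption.
  - exact (@is_derive_const R_AbsRing R_NormedModule c x).
Qed.

Lemma der_scal_comp (h d : R -> R) (rho x Dh dd : R) : is_derive h (d x) Dh -> is_derive d x dd ->
  is_derive (fun t => rho * h (d t)) x (rho * (dd * Dh)).
Proof.
  intros H1 H2. apply (is_derive_scal (fun t => h (d t))).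
  pose proof (is_derive_comp h d x Dh dd H1 H2) as H. exact H.
Qed.

Theorem lemma2 (po1 po2 ro eps pd1 pd2 rs rho gam : R)
  (Hro : 0 < ro) (Heps : 0 < eps)
  (Hpd : in_Xp po1 po2 ro eps pd1 pd2)
  (Hrs1 : eps < rs) (Hrs2 : rs < d_o po1 po2 ro pd1 pd2)
  (Hrho : 0 < rho) (Hgam : 0 < gam) :
  (forall p1 p2 th : R, in_Xp po1 po2 ro eps p1 p2 ->
     is_derive (fun x => mVnav po1 po2 ro pd1 pd2 rs rho gam x p2 th) p1
       (gradVnav1 po1 po2 ro pd1 pd2 rs rho p1 p2
        + ((pd1 - po1) - (cos th * (pd1 - po1) + sin th * (pd2 - po2)))) /\
     is_derive (fun y => mVnav po1 po2 ro pd1 pd2 rs rho gam p1 y th) p2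
       (gradVnav2 po1 po2 ro pd1 pd2 rs rho p1 p2
        + ((pd2 - po2) - (- sin th * (pd1 - po1) + cos th * (pd2 - po2)))) /\
     is_derive (fun t => mVnav po1 po2 ro pd1 pd2 rs rho gam p1 p2 t) th
       (gam * th
        - ((p1 - po1) * (- (- sin th * (po1 - pd1) + cos th * (po2 - pd2)))
           + (p2 - po2) * (cos th * (po1 - pd1) + sin th * (po2 - pd2))))) /\
  (forall p1 p2 th : R,
     (in_Xp po1 po2 ro eps p1 p2 /\
      dmV_p1 po1 po2 ro pd1 pd2 rs rho gam p1 p2 th = 0 /\
      dmV_p2 po1 po2 ro pd1 pd2 rs rho gam p1 p2 th = 0 /\
      dmV_th po1 po2 ro pd1 pd2 rs rho gam p1 p2 th = 0)
     <->
     ((in_Xp po1 po2 ro eps p1 p2 /\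
       gradVnav1 po1 po2 ro pd1 pd2 rs rho p1 p2 = 0 /\
       gradVnav2 po1 po2 ro pd1 pd2 rs rho p1 p2 = 0) /\ th = 0)).
Proof.
  assert (Part1 : forall p1 p2 th : R, in_Xp po1 po2 ro eps p1 p2 ->
     is_derive (fun x => mVnav po1 po2 ro pd1 pd2 rs rho gam x p2 th) p1
       (gradVnav1 po1 po2 ro pd1 pd2 rs rho p1 p2
        + ((pd1 - po1) - (cos th * (pd1 - po1) + sin th * (pd2 - po2)))) /\
     is_derive (fun y => mVnav po1 po2 ro pd1 pd2 rs rho gam p1 y th) p2
       (gradVnav2 po1 po2 ro pd1 pd2 rs rho p1 p2
        + ((pd2 - po2) - (- sin th * (pd1 - po1) + cos th * (pd2 - po2)))) /\
     is_derive (fun t => mVnav po1 po2 ro pd1 pd2 rs rho gam p1 p2 t) th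
       (gam * th
        - ((p1 - po1) * (- (- sin th * (po1 - pd1) + cos th * (po2 - pd2)))
           + (p2 - po2) * (cos th * (po1 - pd1) + sin th * (po2 - pd2))))).
  { intros p1 p2 th HX.
    unfold in_Xp in HX.
    assert (Hpos : 0 < (p1-po1)^2+(p2-po2)^2).
    { destruct (Rle_lt_dec ((p1-po1)^2+(p2-po2)^2) 0) as [Hle|]; [|assumption].
      exfalso. pose proof (pow2_ge_0 (p1-po1)). pose proof (pow2_ge_0 (p2-po2)). assert (Hz : (p1-po1)*(p1-po1)+(p2-po2)*(p2-po2) = 0) by (simpl in *; lra).
      unfold norm2 in HX. rewrite Hz, sqrt_0 in HX. lra. }
    assert (Hd : 0 < d_o po1 po2 ro p1 p2) by (unfold d_o; lra).
    pose proof (Derive_correct _ _ (phi_ex_derive rs _ ltac:(lra) Hd)) as Dphi.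
    pose proof (sin2_cos2 th) as Hsc. unfold Rsqr in Hsc.
    split; [|split].
    - eapply is_derive_ext. { intro t. symmetry. apply mV_eq. }
      eapply is_derive_eq.
      { apply (der_sum3 (fun t => / 2 * ((po1 + (cos th * (t - po1) - sin th * (p2 - po2)) - pd1) ^ 2
       + (po2 + (sin th * (t - po1) + cos th * (p2 - po2)) - pd2) ^ 2))
                 (fun t => rho * phi rs (d_o po1 po2 ro t p2))).
        - auto_derive; [exact I|reflexivity].
        - apply (der_scal_comp (phi rs) (fun t => d_o po1 po2 ro t p2)).
          + exact Dphi.
          + apply d_o_der1; exact Hpos. }
      unfold gradVnav1, scal, zero; simpl; unfold mult; simpl.
      assert (Hsc' : (p1-po1)*(sin th*sin th+cos th*cos th) = p1 - po1) by (rewrite Hsc; ring).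
      unfold Rdiv in *. lra.
    - eapply is_derive_ext. { intro t. symmetry. apply mV_eq. }
      eapply is_derive_eq.
      { apply (der_sum3 (fun t => / 2 * ((po1 + (cos th * (p1 - po1) - sin th * (t - po2)) - pd1) ^ 2
       + (po2 + (sin th * (p1 - po1) + cos th * (t - po2)) - pd2) ^ 2))
                 (fun t => rho * phi rs (d_o po1 po2 ro p1 t))).
        - auto_derive; [exact I|reflexivity].
        - apply (der_scal_comp (phi rs) (fun t => d_o po1 po2 ro p1 t)).
          + exact Dphi.
          + apply d_o_der2; exact Hpos. }
      unfold gradVnav2, scal, zero; simpl; unfold mult; simpl.
      assert (Hsc' : (p2-po2)*(sin th*sin th+cos th*cos th) = p2 - po2) by (rewrite Hsc; ring).
      unfold Rdiv in *. lra.
    - eapply is_derive_ext. { intro t. symmetry. apply mV_eq. }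
      eapply is_derive_eq.
      { auto_derive; [exact I|reflexivity]. }
      unfold Rdiv; lra. }
  split; [exact Part1|].
  intros p1 p2 th. split.
  - intros [HX [E1 [E2 E3]]].
    destruct (Part1 p1 p2 th HX) as [D1 [D2 D3]].
    unfold dmV_p1 in E1; unfold dmV_p2 in E2; unfold dmV_th in E3.
    pose proof (eq_trans (eq_sym (is_derive_unique _ _ _ D1)) E1) as E1'. clear E1; rename E1' into E1.
    pose proof (eq_trans (eq_sym (is_derive_unique _ _ _ D2)) E2) as E2'. clear E2; rename E2' into E2.
    pose proof (eq_trans (eq_sym (is_derive_unique _ _ _ D3)) E3) as E3'. clear E3; rename E3' into E3.
    unfold gradVnav1 in E1; unfold gradVnav2 in E2.
    set (K := rho * Derive (phi rs) (d_o po1 po2 ro p1 p2) / norm2 (p1 - po1) (p2 - po2)) in *.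
    assert (F1 : (1 + K) * (p1 - po1) = cos th * (pd1 - po1) + sin th * (pd2 - po2)).
    { match type of E1 with ?A = 0 => assert (HA : (1 + K) * (p1 - po1) - (cos th * (pd1 - po1) + sin th * (pd2 - po2)) = A) by (unfold K, Rdiv; ring) end. lra. }
    assert (F2 : (1 + K) * (p2 - po2) = - sin th * (pd1 - po1) + cos th * (pd2 - po2)).
    { match type of E2 with ?A = 0 => assert (HA : (1 + K) * (p2 - po2) - (- sin th * (pd1 - po1) + cos th * (pd2 - po2)) = A) by (unfold K, Rdiv; ring) end. lra. }
    assert (Hth : gam * th = 0).
    { match type of E3 with ?A = 0 => assert (HA : gam * th = A + ((p1 - po1) * ((1 + K) * (p2 - po2)) - (p2 - po2) * ((1 + K) * (p1 - po1)))) end.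
      { rewrite F1, F2. ring. }
      rewrite HA, E3. ring. }
    assert (th = 0) by nra.
    subst th. rewrite cos_0, sin_0 in *.
    split; [split; [exact HX|split]|reflexivity].
    + match type of E1 with ?A = 0 => assert (HA : gradVnav1 po1 po2 ro pd1 pd2 rs rho p1 p2 = A) by (unfold gradVnav1; ring) end. lra.
    + match type of E2 with ?A = 0 => assert (HA : gradVnav2 po1 po2 ro pd1 pd2 rs rho p1 p2 = A) by (unfold gradVnav2; ring) end. lra.
  - intros [[HX [G1 G2]] ->].
    destruct (Part1 p1 p2 0 HX) as [D1 [D2 D3]].
    unfold dmV_p1, dmV_p2, dmV_th.
    pose proof (is_derive_unique _ _ _ D1) as U1. pose proof (is_derive_unique _ _ _ D2) as U2. pose proof (is_derive_unique _ _ _ D3) as U3.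
    simpl in U1, U2, U3. rewrite U1, U2, U3.
    rewrite cos_0, sin_0. rewrite G1, G2.
    unfold gradVnav1 in G1; unfold gradVnav2 in G2.
    set (K := rho * Derive (phi rs) (d_o po1 po2 ro p1 p2) / norm2 (p1 - po1) (p2 - po2)) in *.
    assert (F1 : (1 + K) * (p1 - po1) = pd1 - po1).
    { match type of G1 with ?A = 0 => assert (HA : (1 + K) * (p1 - po1) - (pd1 - po1) = A) by (unfold K, Rdiv; ring) end. lra. }
    assert (F2 : (1 + K) * (p2 - po2) = pd2 - po2).
    { match type of G2 with ?A = 0 => assert (HA : (1 + K) * (p2 - po2) - (pd2 - po2) = A) by (unfold K, Rdiv; ring) end. lra. }
    split; [exact HX|split; [ring|split; [ring|]]].
    replace (po1 - pd1) with (- ((1 + K) * (p1 - po1))) by lra.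
    replace (po2 - pd2) with (- ((1 + K) * (p2 - po2))) by lra.
    ring.
Qed.
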